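(* In the standing setup below, every $\phi\in\mathrm{Dr}_1(\mathbf{A}_{\mathcal H},L)$ has the form $\phi_{\overline X}=\Delta\tau^2+g\tau+\gamma(\overline X)$ and $\phi_{\overline Y}=\beta\tau_L$, where $\Delta\in L^\times$, $g\in L$, $\beta\in\mathbb{F}_q^\times$. Moreover $\beta$ is a square root of $\alpha\,\mathrm{N}_{L/\mathbb{F}_q}(\Delta)\in\mathbb{F}_q^\times$, and $\beta$ is uniquely determined by $\Delta$ and $g$ (i.e. two modules in $\mathrm{Dr}_1(\mathbf{A}_{\mathcal H},L)$ with the same $\phi_{\overline X}$ coincide).
   Context: Standing setup: $\mathbb{F}_q$ is the finite field with $q$ elements. Let $d\ge5$ be odd, $m$ a positive divisor of $d$, $p\in\mathbb{F}_q[X]$ monic irreducible of degree $d/m$, $f=\alpha p^m$ with $\alpha\in\mathbb{F}_q^\times$, and $h\in\mathbb{F}_q[X]$ nonzero of degree $\le(d-1)/2$ and not divisible by $p$. Let $\xi=Y^2+h(X)Y-f(X)$ and assume the affine plane curve $\mathcal H:\xi=0$ is nonsingular. Let $\mathbf{A}_{\mathcal H}=\mathbb{F}_q[X][Y]/(\xi)$, $\mathfrak{p}=\langle p(\overline X),\overline Y\rangle$, $L$ a degree-$m$ extension of $\mathbf{A}_{\mathcal H}/\mathfrak{p}\simeq\mathbb{F}_q[X]/(p)$ (so $[L:\mathbb{F}_q]=d$), $\gamma:\mathbf{A}_{\mathcal H}\to\mathbf{A}_{\mathcal H}/\mathfrak{p}\hookrightarrow L$. $L\{\tau\}$ is the Ore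 polynomial ring with $\tau a=a^q\tau$; $\tau_L=\tau^d$. A Drinfeld $\mathbf{A}_{\mathcal H}$-module over $L$ is an $\mathbb{F}_q$-algebra morphism $\phi:\mathbf{A}_{\mathcal H}\to L\{\tau\}$ with constant coefficient of $\phi_a$ equal to $\gamma(a)$ and some $\phi_a$ nonconstant; it has rank $1$ if $\deg_\tau\phi_a=\deg(a)=\log_q\#(\mathbf{A}_{\mathcal H}/a\mathbf{A}_{\mathcal H})$ for all $a\neq0$; $\mathrm{Dr}_1(\mathbf{A}_{\mathcal H},L)$ is the set of these. $\mathrm{N}_{L/\mathbb{F}_q}$ is the field norm. *)

(* Defs.v *)
From HB Require Import structures.
From mathcomp Require Import all_boot all_order all_algebra all_field.
Set Implicit Arguments. Unset Strict Implicit. Unset Printing Implicit Defensive.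
Import GRing.Theory.
Local Open Scope ring_scope.

(* Conventions.
   - A polynomial r : {poly {poly F}} is a polynomial in Y (outer variable 'X)
     with coefficients in F[X] (inner variable); so  Xbar = ('X)%:P  and
     Ybar = 'X.  The ring A_H = F[X][Y]/(xi) is handled through its
     representatives in F[X][Y]; morphisms out of A_H are morphisms out of
     F[X][Y] vanishing on the ideal (xi).
   - An Ore polynomial  sum_i a_i tau^i  in L{tau} is stored as the
     coefficient list  sum_i a_i 'X^i : {poly L}; its tau-degree is
     (size P).-1. *)

(* Ore multiplication in L{tau}, tau a = a^q tau. *)
Definition oremul (q : nat) (L : comNzRingType) (P Q : {poly L}) : {poly L} :=
  \sum_(i < size P) (P`_i *: 'X^i) * map_poly (fun b => b ^+ (q ^ i)) Q.

Definition ev2 (F : fieldType) (K : fieldExtType F) (x y : K)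
  (P : {poly {poly F}}) : K :=
  (map_poly (fun c : {poly F} => (map_poly (in_alg K) c).[x]) P).[y].

Definition dY (F : fieldType) (P : {poly {poly F}}) := P^`().
Definition dX (F : fieldType) (P : {poly {poly F}}) := map_poly (@deriv F) P.

(* the curve xi = 0 is nonsingular: no point over any (finite) field
   extension of F (hence over the algebraic closure) where xi and both
   partial derivatives vanish *)
Definition nonsingular (F : fieldType) (xi : {poly {poly F}}) : Prop :=
  forall (K : fieldExtType F) (x y : K),
    ~ [/\ ev2 x y xi = 0, ev2 x y (dX xi) = 0 & ev2 x y (dY xi) = 0].

Definition in_ideal1 (F : fieldType) (xi a : {poly {poly F}}) : Prop :=
  exists u, a = xi * u.

Definition in_ideal2 (F : fieldType) (xi a r : {poly {poly F}}) : Prop :=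
  exists u v, r = xi * u + a * v.

(* #(A_H / a A_H) = N : S is a complete, irredundant list of
   representatives of F[X][Y]/(xi, a) = A_H/aA_H, of size N. *)
Definition quot_card (F : fieldType) (xi a : {poly {poly F}}) (N : nat) : Prop :=
  exists S : seq {poly {poly F}},
    [/\ (forall r, exists2 s, s \in S & in_ideal2 xi a (r - s)),
        (forall s t, s \in S -> t \in S -> in_ideal2 xi a (s - t) -> s = t),
        uniq S & size S = N].

(* gamma : A_H -> A_H/p = F[X]/(p) -> L, the embedding F[X]/(p) -> L being
   given by a root theta of p in L :  gamma(P(X,Y)) = P(theta, 0). *)
Definition gammaL (F : fieldType) (L : fieldExtType F) (theta : L)
  (a : {poly {poly F}}) : L :=
  (map_poly (in_alg L) a.[0]).[theta].

(* Drinfeld A_H-module over L (phi given on representatives in F[X][Y]):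
   F_q-algebra morphism A_H -> L{tau} with constant term gamma and some
   phi_a nonconstant. *)
Definition drinfeld (F : finFieldType) (L : fieldExtType F)
  (xi : {poly {poly F}}) (theta : L) (phi : {poly {poly F}} -> {poly L}) : Prop :=
  [/\ (forall a b, phi (a + b) = phi a + phi b),
      (forall a b, phi (a * b) = oremul #|F| (phi a) (phi b)),
      (forall c : F, phi (c%:P%:P) = (in_alg L c)%:P),
      (forall a, in_ideal1 xi a -> phi a = 0)
    & (forall a, (phi a)`_0 = gammaL theta a)]
  /\ (exists a, (1 < size (phi a))%N).

(* rank 1: deg_tau phi_a = deg a = log_q #(A_H/aA_H) for every a <> 0 in A_H *)
Definition rank1 (F : finFieldType) (L : fieldExtType F)
  (xi : {poly {poly F}}) (phi : {poly {poly F}} -> {poly L}) : Prop :=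
  forall a, ~ in_ideal1 xi a -> quot_card xi a (#|F| ^ (size (phi a)).-1).

Definition Dr1 (F : finFieldType) (L : fieldExtType F)
  (xi : {poly {poly F}}) (theta : L) (phi : {poly {poly F}} -> {poly L}) : Prop :=
  drinfeld xi theta phi /\ rank1 xi phi.

(* Main.v *)
Require Import Defs.
From HB Require Import structures.
From mathcomp Require Import all_boot all_order all_algebra all_field all_fingroup all_solvable.
From mathcomp Require Import zify ring.
Set Implicit Arguments. Unset Strict Implicit.
Import GRing.Theory.
Local Open Scope ring_scope.

Section Ore.
Variables (q : nat) (L : fieldType).
Hypothesis q_gt0 : (0 < q)%N.

Lemma coef_default (Q : {poly L}) j : (size Q <= j)%N -> Q`_j = 0.
Proof. exact: nth_default. Qed.

Lemma expq0 i : (0 : L) ^+ (q ^ i) = 0.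
Proof. by rewrite expr0n expn_eq0 eqn0Ngt q_gt0. Qed.

Lemma oremul_coef (P Q : {poly L}) n :
  (oremul q P Q)`_n = \sum_(i < size P)
      (if (i <= n)%N then P`_i * (Q`_(n - i)) ^+ (q ^ i) else 0).
Proof.
rewrite /oremul coef_sum; apply: eq_bigr => i _.
rewrite -scalerAl coefZ coefXnM; case: ltnP => H; first by rewrite mulr0.
by rewrite coef_map_id0 // expq0.
Qed.

Lemma oremul0p (Q : {poly L}) : oremul q 0 Q = 0.
Proof. by rewrite /oremul size_poly0 big_ord0. Qed.

Lemma oremulp0 (P : {poly L}) : oremul q P 0 = 0.
Proof. by apply/polyP=> n; rewrite oremul_coef coef0 big1 // => i _; rewrite coef0 expq0 mulr0 if_same. Qed.

Lemma oremul_low (P Q : {poly L}) a b :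
  (forall i, (i < a)%N -> P`_i = 0) -> (forall i, (i < b)%N -> Q`_i = 0) ->
  forall n, (n < a + b)%N -> (oremul q P Q)`_n = 0.
Proof.
move=> HP HQ n Hn; rewrite oremul_coef big1 // => i _.
case: ifP => // Hin.
have [Hia|Hia] := ltnP i a; first by rewrite HP // mul0r.
by rewrite HQ ?expq0 ?mulr0 //; lia.
Qed.

Lemma oremul_lowc (P Q : {poly L}) a b :
  (forall i, (i < a)%N -> P`_i = 0) -> (forall i, (i < b)%N -> Q`_i = 0) ->
  (oremul q P Q)`_(a + b) = P`_a * Q`_b ^+ (q ^ a).
Proof.
move=> HP HQ; rewrite oremul_coef.
have [Ha|Ha] := ltnP a (size P); last first.
  rewrite (nth_default 0 Ha) mul0r big1 // => i _.
  case: ifP => // _; have [Hia|Hia] := ltnP i a; first by rewrite HP // mul0r.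
  by have := ltn_ord i; lia.
rewrite (bigD1 (Ordinal Ha)) //= leq_addr addKn big1 ?addr0 // => i Hi.
case: ifP => // Hin; have [Hia|Hia] := ltnP i a; first by rewrite HP // mul0r.
have Hne : nat_of_ord i != a by apply: contra Hi => /eqP Hi; apply/eqP/val_inj.
by rewrite HQ ?expq0 ?mulr0 //; lia.
Qed.

Lemma oremul_high (P Q : {poly L}) n :
  (size P + size Q <= n.+1)%N -> (oremul q P Q)`_n = 0.
Proof.
move=> Hn; rewrite oremul_coef big1 // => i _.
case: ifP => // Hin; rewrite [Q`__]coef_default ?expq0 ?mulr0 //.
by have := ltn_ord i; lia.
Qed.

Lemma oremul_top (P Q : {poly L}) : P != 0 -> Q != 0 ->
  (oremul q P Q)`_((size P).-1 + (size Q).-1) =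
  lead_coef P * lead_coef Q ^+ (q ^ (size P).-1).
Proof.
move=> nzP nzQ; rewrite oremul_coef.
have HP : (0 < size P)%N by rewrite size_poly_gt0.
have HQ : (0 < size Q)%N by rewrite size_poly_gt0.
have Ha : ((size P).-1 < size P)%N by lia.
rewrite (bigD1 (Ordinal Ha)) //= leq_addr addKn big1 ?addr0 // => i Hi.
case: ifP => // Hin.
have Hne : nat_of_ord i != (size P).-1 by apply: contra Hi => /eqP Hi; apply/eqP/val_inj.
rewrite [Q`__]coef_default ?expq0 ?mulr0 //.
move: (ltn_ord i) Hin Hne HP HQ; clear; set sP := size P; set sQ := size Q; lia.
Qed.

Lemma frob_neq0 (x : L) k : x != 0 -> x ^+ k != 0.
Proof. by move=> nz; rewrite expf_neq0. Qed.

Lemma size_oremul (P Q : {poly L}) : P != 0 -> Q != 0 ->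
  size (oremul q P Q) = (size P + size Q).-1.
Proof.
move=> nzP nzQ.
have HP : (0 < size P)%N by rewrite size_poly_gt0.
have HQ : (0 < size Q)%N by rewrite size_poly_gt0.
apply/eqP; rewrite eqn_leq; apply/andP; split.
  apply/leq_sizeP => j Hj; apply: oremul_high; lia.
have := @oremul_top P Q nzP nzQ.
have -> : ((size P + size Q).-1 = ((size P).-1 + (size Q).-1).+1)%N by lia.
move=> Ht; rewrite ltnNge; apply/negP => /leq_sizeP /(_ _ (leqnn _)).
rewrite Ht => /eqP; rewrite mulf_eq0 lead_coef_eq0 (negPf nzP) /=.
by rewrite expf_eq0 lead_coef_eq0 (negPf nzQ) andbF.
Qed.

Lemma lead_oremul (P Q : {poly L}) : P != 0 -> Q != 0 ->
  lead_coef (oremul q P Q) = lead_coef P * lead_coef Q ^+ (q ^ (size P).-1).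
Proof.
move=> nzP nzQ; rewrite /lead_coef size_oremul // -oremul_top //.
have HP : (0 < size P)%N by rewrite size_poly_gt0.
have HQ : (0 < size Q)%N by rewrite size_poly_gt0.
congr (_`_ _); lia.
Qed.

End Ore.
Section Frob.
Variables (F : finFieldType) (L : splittingFieldType F).
Local Notation q := #|F|.

Lemma q_gt1 : (1 < q)%N. Proof. exact: finNzRing_gt1. Qed.
Lemma q_gt0 : (0 < q)%N. Proof. exact: ltnW q_gt1. Qed.

Lemma frobD1 (x y : L) : (x + y) ^+ q = x ^+ q + y ^+ q.
Proof.
have [p _ pcharFp] := finPcharP F; rewrite (card_pprimeChar pcharFp).
elim: (logn _ _) x y => [|n IHn] x y; first by rewrite !expr1.
rewrite expnSr !exprM IHn.
rewrite -(pchar_lalg L) in pcharFp; rewrite -!(pFrobenius_autE pcharFp). by rewrite pFrobenius_autD_comm //; exact: mulrC.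
Qed.

Lemma frobDj j (x y : L) : (x + y) ^+ (q ^ j) = x ^+ (q ^ j) + y ^+ (q ^ j).
Proof.
elim: j x y => [|j IH] x y; first by rewrite !expr1.
by rewrite expnS !exprM frobD1 IH.
Qed.

Lemma frob_alg j (c : F) : (in_alg L c) ^+ (q ^ j) = in_alg L c.
Proof.
elim: j => [|j IH]; first by rewrite expr1.
by rewrite expnS mulnC exprM IH -rmorphXn /= expf_card.
Qed.

Lemma frob_all (x : L) : x ^+ (q ^ \dim {:L}) = x.
Proof. by apply/eqP; rewrite -Fermat's_little_theorem memvf. Qed.

Lemma frob_fixF (x : L) : x ^+ q = x -> exists c, x = in_alg L c.
Proof.
move=> Hx; have : x \in (1%VS : {vspace L}).
  by rewrite Fermat's_little_theorem dimv1 expn1 Hx.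
by case/vlineP => c ->; exists c.
Qed.

End Frob.

Section Irr.
Variables (F : finFieldType) (L : splittingFieldType F).
Local Notation q := #|F|.
Variables (p : {poly F}) (theta : L).
Hypothesis irr_p : irreducible_poly p.
Hypothesis root_p : (map_poly (in_alg L) p).[theta] = 0.

Lemma irr_coprime (w : {poly F}) : ~~ (p %| w) -> coprimep p w.
Proof.
move=> ndvd; have [H|H] := irredp_XsubCP irr_p (dvdp_gcdl p w).
  by rewrite coprimep_def (eqp_size H) size_poly1.
by case/negP: ndvd; rewrite -(eqp_dvdl _ H) dvdp_gcdr.
Qed.

Lemma nonroot (w : {poly F}) : ~~ (p %| w) -> (map_poly (in_alg L) w).[theta] != 0.
Proof.
move=> ndvd; apply: (coprimep_root (p := map_poly (in_alg L) p)).
  by rewrite coprimep_map irr_coprime.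
exact/rootP.
Qed.

Lemma root_dvd (w : {poly F}) : (map_poly (in_alg L) w).[theta] = 0 -> p %| w.
Proof.
move=> H; apply/negPn/negP => /nonroot; by rewrite H eqxx.
Qed.

Lemma frob_horner j (w : {poly F}) (x : L) :
  ((map_poly (in_alg L) w).[x]) ^+ (q ^ j) = (map_poly (in_alg L) w).[x ^+ (q ^ j)].
Proof.
elim/poly_ind: w => [|w c IH].
  by rewrite rmorph0 !horner0 expr0n expn_eq0 eqn0Ngt q_gt0.
rewrite rmorphD rmorphM /= map_polyX map_polyC !hornerE /=.
by rewrite frobDj exprMn IH frob_alg.
Qed.


Lemma theta_frob j : (0 < j)%N -> theta ^+ (q ^ j) = theta -> ((size p).-1 <= j)%N.
Proof.
move=> j_gt0 Hth; set k := (size p).-1.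
pose fn (f : {ffun 'I_k -> F}) (i : nat) : F := if insub i is Some o then f o else 0.
pose ev (f : {ffun 'I_k -> F}) := (map_poly (in_alg L) (\poly_(i < k) fn f i)).[theta].
pose s := [seq ev f | f : {ffun 'I_k -> F}].
pose P : {poly L} := 'X^(q ^ j) - 'X.
have szP : size P = (q ^ j).+1.
  have q1 : (1 < q ^ j)%N by rewrite -[1%N](expn0 q) ltn_exp2l // q_gt1.
  by rewrite /P size_addl ?size_polyXn // size_opp size_polyX ltnS.
have nzP : P != 0 by rewrite -size_poly_gt0 szP.
have rootsP : all (root P) s.
  apply/allP => x /mapP [f _ ->]; rewrite /root /P !hornerE.
  by rewrite /ev frob_horner Hth subrr.
have inj_ev : injective ev.
  move=> f g Hfg; apply/ffunP => i.
  have : p %| \poly_(i < k) (fn f i - fn g i).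
    apply: root_dvd; rewrite (_ : \poly_(i < k) (fn f i - fn g i) = \poly_(i < k) fn f i - \poly_(i < k) fn g i).
      by rewrite rmorphB hornerD hornerN -/(ev f) -/(ev g) Hfg subrr.
    by apply/polyP => n; rewrite coefB !coef_poly; case: ifP => //; rewrite subr0.
  have [Hz|nz] := eqVneq (\poly_(i < k) (fn f i - fn g i)) 0.
    move=> _; move: (congr1 (fun w : {poly F} => w`_i) Hz) => /=.
    rewrite coef_poly ltn_ord coef0 /fn valK /=.
    by move=> /eqP; rewrite subr_eq0 => /eqP.
  move=> /(dvdp_leq nz); have := size_poly k (fun i => fn f i - fn g i).
  have : (0 < size p)%N by rewrite size_poly_gt0 irredp_neq0.
  rewrite /k; set sp := size p; set sw := size _; lia.
have Us : uniq s by rewrite map_inj_uniq ?enum_uniq.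
have := max_poly_roots nzP rootsP Us.
rewrite szP size_map -cardE card_ffun card_ord ltnS leq_exp2l //; exact: q_gt1.
Qed.

End Irr.

Section Quot.
Variables (F : finFieldType) (a b : {poly F}).
Local Notation q := #|F|.
Let xi : {poly {poly F}} := 'X^2 + a%:P * 'X + b%:P.
Let ev0 (r : {poly {poly F}}) : {poly F} := map_poly (horner_eval 0) r.
Let lift (w : {poly F}) : {poly {poly F}} := map_poly polyC w.
Let xi0 : {poly F} := 'X^2 + a.[0]%:P * 'X + b.[0]%:P.
Let red r := ev0 r %% xi0.

Lemma ev0_xi : ev0 xi = xi0.
Proof.
by rewrite /ev0 /xi !rmorphD !rmorphM /= !map_polyC !map_polyX /= !horner_evalE /xi0 expr2.
Qed.

Lemma ev0X : ev0 ('X%:P) = 0.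
Proof. by rewrite /ev0 map_polyC /= horner_evalE hornerX. Qed.

Lemma size_xi0 : size xi0 = 3%N.
Proof.
rewrite /xi0 -addrA size_addl ?size_polyXn // size_MXaddC.
by case: ifP => // _; rewrite ltnS size_polyC; case: (_ != 0).
Qed.

Lemma decomp r : exists v, r = lift (ev0 r) + 'X%:P * v.
Proof.
exists (\poly_(i < size r) (r`_i %/ 'X)); apply/polyP => i.
rewrite coefD coefCM /lift /ev0 !coef_map /= horner_evalE coef_poly.
case: (ltnP i (size r)) => Hi; last by rewrite nth_default // horner0 polyC0 mulr0 addr0.
have := modp_XsubC r`_i 0; rewrite polyC0 subr0 => Hm.
by rewrite {1}(divp_eq r`_i 'X) Hm addrC mulrC.
Qed.

Lemma ideal_red r : in_ideal2 xi ('X%:P) r -> red r = 0.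
Proof.
case=> u [v ->]; have E1 := ev0_xi; have E2 := ev0X; rewrite /ev0 in E1 E2; rewrite /red /ev0 rmorphD !rmorphM /= E1 E2 mul0r addr0.
by rewrite mulrC modp_mull.
Qed.


Lemma ev0_lift w : ev0 (lift w) = w.
Proof.
apply/polyP => i; rewrite /ev0 /lift coef_map /= coef_map /= horner_evalE hornerC //.
Qed.

Lemma red_ideal r : red r = 0 -> in_ideal2 xi ('X%:P) r.
Proof.
move=> Hr; have [v Hv] := decomp r; have [w Hw] := decomp xi.
rewrite ev0_xi in Hw.
set D := ev0 r %/ xi0.
have E : ev0 r = D * xi0 by rewrite {1}(divp_eq (ev0 r) xi0) -/(red r) Hr addr0.
have Hl : lift xi0 = xi - 'X%:P * w by rewrite [in RHS]Hw addrK.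
exists (lift D), (v - lift D * w).
rewrite {1}Hv E /lift rmorphM /= -/(lift _) -/(lift xi0) Hl.
ring.
Qed.

Lemma not_ideal_X : ~ in_ideal1 xi ('X%:P).
Proof.
case=> u Hu.
have Hs : size xi = 3%N.
  rewrite /xi -addrA size_addl ?size_polyXn // size_MXaddC.
  by case: ifP => // _; rewrite ltnS size_polyC; case: (_ != 0).
have [u0|nzu] := eqVneq u 0.
  by move: Hu; rewrite u0 mulr0 => /eqP; rewrite polyC_eq0 polyX_eq0.
have := congr1 (fun x : {poly {poly F}} => size x) Hu; rewrite /= size_polyC polyX_eq0 /= size_mul //; last by rewrite -size_poly_eq0 Hs.
have : (0 < size u)%N by rewrite size_poly_gt0.
move: Hs; set sx := size xi; set su := size u; lia.
Qed.

Lemma quot_X N : quot_card xi ('X%:P) N -> N = (q ^ 2)%N.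
Proof.
case=> S [Hc Hi Hu <-].
pose red2 r : F * F := ((red r)`_0, (red r)`_1).
have redB s t : red (s - t) = red s - red t by rewrite /red /ev0 rmorphB modpD modpN.
have red2_0 r : red2 r = (0, 0) -> red r = 0.
  case=> H0 H1; apply/polyP => i; rewrite coef0.
  have := ltn_modp (ev0 r) xi0; rewrite -size_poly_eq0 size_xi0 /= => Hs.
  case: i => [|[|i]] //; rewrite nth_default //; rewrite -/(red r) in Hs; lia.
have inj : {in S &, injective red2}.
  move=> s t Hs Ht [H0 H1]; apply: Hi => //; apply: red_ideal; apply: red2_0.
  by rewrite /red2 redB !coefB H0 H1 !subrr.
have U : uniq (map red2 S) by rewrite map_inj_in_uniq.
have all_in : forall c : F * F, c \in map red2 S.
  case=> c0 c1; pose w : {poly F} := c0%:P + c1 *: 'X.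
  have szw : (size w < size xi0)%N.
    rewrite size_xi0 /w; apply: leq_ltn_trans (size_add _ _) _.
    rewrite size_polyC gtn_max; apply/andP; split; first by case: (_ != 0).
    by apply: leq_ltn_trans (size_scale_leq _ _) _; rewrite size_polyX.
  have [s Hs Hrs] := Hc (lift w); apply/mapP; exists s => //.
  have := ideal_red Hrs; rewrite redB => /eqP; rewrite subr_eq0 => /eqP E.
  rewrite /red2 -E /red ev0_lift modp_small // /w !coefD !coefC !coefZ !coefX /=.
  by rewrite mulr0 mulr1 addr0 add0r.
have -> : size S = size (map red2 S) by rewrite size_map.
have -> : (q ^ 2 = #|{: F * F}|)%N by rewrite card_prod mulnn.
rewrite cardE; apply/eqP; rewrite eqn_leq; apply/andP; split.
  by apply: (uniq_leq_size U) => x _; rewrite mem_enum.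
by apply: (uniq_leq_size (enum_uniq _)) => x _.
Qed.

End Quot.

Section Norm.
Variables (F : finFieldType) (L : splittingFieldType F).
Local Notation q := #|F|.
Variable d : nat.
Hypothesis dimL : \dim {:L} = d.
Hypothesis odd_d : odd d.

Lemma frob_mul (x : L) t : x ^+ (q ^ (d * t)) = x.
Proof.
elim: t => [|t IH]; first by rewrite muln0 expr1.
by rewrite mulnS expnD exprM -dimL frob_all dimL IH.
Qed.

Lemma frob_mod (x : L) n : x ^+ (q ^ n) = x ^+ (q ^ (n %% d)).
Proof.
by rewrite {1}(divn_eq n d) expnD exprM mulnC frob_mul.
Qed.

Lemma norm_odd (x : L) :
  \prod_(i < d) x ^+ (q ^ (2 * i)) = galNorm 1 {:L} x.
Proof.
have d_gt0 : (0 < d)%N by case: d odd_d.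
pose h (i : 'I_d) : 'I_d := Ordinal (ltn_pmod (2 * i) d_gt0).
have inj_h : injective h.
  move=> i j /(congr1 val) /= /eqP Hij; apply/val_inj => /=.
  wlog le_ji : i j Hij / (j <= i)%N.
    move=> IH; case: (leqP j i) => H; first exact: IH.
    by apply/esym/IH; rewrite 1?eq_sym // ltnW.
  have : (d %| 2 * i - 2 * j)%N by rewrite -eqn_mod_dvd // leq_mul2l le_ji orbT.
  rewrite -mulnBr Gauss_dvdr; last by rewrite coprimen2 odd_d.
move=> Hd; apply/eqP; rewrite eqn_leq le_ji andbT -subn_eq0; apply/negPn/negP => Hne.
  have := dvdn_leq (neq0_lt0n (negbTE Hne)) Hd; have := ltn_ord i; have := ltn_ord j.
  move: (nat_of_ord i) (nat_of_ord j) => a b; lia.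
have -> : \prod_(i < d) x ^+ (q ^ (2 * i)) = \prod_(i < d) x ^+ (q ^ i).
  rewrite [RHS](reindex_inj inj_h); apply: eq_bigr => i _ /=; by rewrite (frob_mod x (2 * i)).
have [alpha gen Dalpha] := @finField_galois_generator _ L 1%AS {:L}%AS (sub1v _).
have ord_a : #[alpha]%g = d.
  rewrite orderE -(eqP gen) -galois_dim ?finField_galois ?sub1v //.
  by rewrite dimv1 divn1 dimL.
have Dpow i : (alpha ^+ i)%g x = x ^+ (q ^ i).
  elim: i => [|i IH]; first by rewrite expg0 gal_id expr1.
  by rewrite expgSr galM ?memvf // IH Dalpha ?memvf // dimv1 expn1 expnSr exprM.
rewrite /galNorm (eqP gen).
have -> : <[alpha]>%g = [set (alpha ^+ (nat_of_ord i))%g | i : 'I_d].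
  apply/setP => f; apply/idP/imsetP.
    case/cyclePmin => i; rewrite ord_a => Hi ->; by exists (Ordinal Hi).
  by case=> i _ ->; rewrite mem_cycle.
rewrite big_imset /=; last first.
  move=> i j _ _ /eqP; rewrite eq_expg_mod_order ord_a !modn_small //.
  by move=> /eqP /val_inj.
by apply: eq_bigr => i _; rewrite Dpow.
Qed.
End Norm.


Section Gamma.
Variables (F : fieldType) (L : fieldExtType F) (theta : L).
Lemma gammaLD a b : gammaL theta (a + b) = gammaL theta a + gammaL theta b.
Proof. by rewrite /gammaL hornerD rmorphD hornerD. Qed.
Lemma gammaL_X : gammaL theta 'X = 0.
Proof. by rewrite /gammaL hornerX rmorph0 horner0. Qed.
Lemma gammaL_C c : gammaL theta c%:P = (map_poly (in_alg L) c).[theta].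
Proof. by rewrite /gammaL hornerC. Qed.
Lemma gammaL_XC : gammaL theta ('X%:P) = theta.
Proof. by rewrite gammaL_C map_polyX hornerX. Qed.
End Gamma.

Section Main.
Variables (F : finFieldType) (d m : nat) (p : {poly F}) (alpha : F)
  (h : {poly F}) (L : splittingFieldType F) (theta : L).
Hypotheses (odd_d : odd d) (d5 : (5 <= d)%N) (m_gt0 : (0 < m)%N) (m_d : (m %| d)%N)
  (mon_p : p \is monic) (irr_p : irreducible_poly p) (size_p : size p = (d %/ m).+1)
  (alpha0 : alpha != 0) (h0 : h != 0) (size_h : (size h <= (d.-1)./2 + 1)%N)
  (ph : ~~ (p %| h)) (dimL : \dim {:L} = d)
  (root_p : (map_poly (in_alg L) p).[theta] = 0).
Let xi : {poly {poly F}} := 'X^2 + h%:P * 'X - (alpha *: p ^+ m)%:P.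
Local Notation q := #|F|.
Local Notation om := (oremul #|F| (L:=L)).
Variable phi : {poly {poly F}} -> {poly L}.
Hypothesis Hphi : Dr1 xi theta phi.

Let qg0 : (0 < q)%N := q_gt0 F.

Lemma phiD a b : phi (a + b) = phi a + phi b.
Proof. by case: Hphi => [[[HD HM HC HI H0] _] _]; auto. Qed.
Lemma phiM a b : phi (a * b) = om (phi a) (phi b).
Proof. by case: Hphi => [[[HD HM HC HI H0] _] _]; auto. Qed.
Lemma phiCC c : phi (c%:P%:P) = (in_alg L c)%:P.
Proof. by case: Hphi => [[[HD HM HC HI H0] _] _]; auto. Qed.
Lemma phiI a : in_ideal1 xi a -> phi a = 0.
Proof. by case: Hphi => [[[HD HM HC HI H0] _] _]; auto. Qed.
Lemma phi0c a : (phi a)`_0 = gammaL theta a.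
Proof. by case: Hphi => [[[HD HM HC HI H0] _] _]; auto. Qed.
Lemma phi0 : phi 0 = 0.
Proof. by have := phiD 0 0; rewrite addr0 => /eqP; rewrite -subr_eq addrN eq_sym => /eqP. Qed.
Lemma phiN a : phi (- a) = - phi a.
Proof. by apply/eqP; rewrite -addr_eq0 -phiD addNr phi0. Qed.
Lemma phiB a b : phi (a - b) = phi a - phi b.
Proof. by rewrite phiD phiN. Qed.

Let phX := phi ('X%:P).

Lemma size_phX : size phX = 3%N.
Proof.
case: Hphi => _ Hr.
have Hx : xi = 'X^2 + h%:P * 'X + (- (alpha *: p ^+ m))%:P by rewrite /xi polyCN.
have := Hr ('X%:P); rewrite Hx => /(_ (@not_ideal_X _ _ _)) /quot_X.
move/expnI => /(_ (q_gt1 F)).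
by rewrite -/phX; case: (size phX) => [|[|[|[|n]]]].
Qed.


Let Delta := phX`_2.
Let gg := phX`_1.

Lemma Delta_neq0 : Delta != 0.
Proof.
have : lead_coef phX != 0 by rewrite lead_coef_eq0 -size_poly_gt0 size_phX.
by rewrite /lead_coef size_phX.
Qed.

Lemma phX_form : phX = Delta *: 'X^2 + gg *: 'X + (gammaL theta ('X%:P))%:P.
Proof.
apply/polyP => i; rewrite !coefD !coefZ !coefXn coefX coefC -phi0c.
case: i => [|[|[|i]]] /=; rewrite ?mulr0 ?mulr1 ?add0r ?addr0 //.
by rewrite nth_default // size_phX.
Qed.

Lemma phX0 : phX`_0 = theta.
Proof. by rewrite phi0c gammaL_XC. Qed.

Let lam n := \prod_(i < n) Delta ^+ (q ^ (2 * i)).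

Lemma phiC_add c e : phi ((c * 'X + e%:P)%:P) = om (phi c%:P) phX + (in_alg L e)%:P.
Proof. by rewrite polyCD polyCM phiD phiM phiCC. Qed.

Lemma phiC_poly c : c != 0 ->
  size (phi c%:P) = (size c).*2.-1 /\
  lead_coef (phi c%:P) = in_alg L (lead_coef c) * lam (size c).-1.
Proof.
elim/poly_ind: c => [|c e IH]; first by rewrite eqxx.
move=> nz; rewrite phiC_add.
have [c0|nzc] := eqVneq c 0.
  move: nz; rewrite c0 mul0r add0r polyC_eq0 => nze.
  rewrite phi0 oremul0p add0r /lam !size_polyC !lead_coefC nze fmorph_eq0 nze /= big_ord0 mulr1.
  by [].
have [IHs IHl] := IH nzc.
have sc : (0 < size c)%N by rewrite size_poly_gt0.
have nzA : phi c%:P != 0 by rewrite -size_poly_gt0 IHs; move: sc; case: (size c).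
have nzX : phX != 0 by rewrite -size_poly_gt0 size_phX.
have sOm : size (om (phi c%:P) phX) = ((size c).*2.+1)%N.
  by rewrite size_oremul // size_phX IHs -!muln2; move: sc; set sC := size c; lia.
have sE : (size (GRing.in_alg L e)%:P < size (om (phi c%:P) phX))%N.
  by rewrite sOm; apply: leq_ltn_trans (size_polyC_leq1 _) _; move: sc; case: (size c).
have szc : size (c * 'X + e%:P) = (size c).+1 by rewrite size_MXaddC (negPf nzc).
have ldc : lead_coef (c * 'X + e%:P) = lead_coef c.
  rewrite lead_coefDl ?lead_coefMX // size_mulX //.
  by apply: leq_ltn_trans (size_polyC_leq1 _) _; move: sc; case: (size c).
split; first by rewrite size_addl // sOm szc.
rewrite lead_coefDl // lead_oremul // IHl ldc szc /=.
have -> : lead_coef phX = Delta by rewrite /lead_coef size_phX.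
rewrite /lam; case Ec: (size c) sc => [//|n] _ /=.
rewrite big_ord_recr /= mulrA; congr (_ * _ ^+ (q ^ _)).
rewrite IHs Ec -muln2; lia.
Qed.



Lemma first_nz (P : {poly L}) : P != 0 ->
  exists j, P`_j != 0 /\ forall i, (i < j)%N -> P`_i = 0.
Proof.
move=> nzP; have ex : exists i, P`_i != 0.
  by exists (size P).-1; rewrite -/(lead_coef P) lead_coef_eq0.
case: (ex_minnP ex) => j Hj Hmin; exists j; split => // i Hi.
by have := Hmin i; case: eqP => // _ /(_ isT); rewrite leqNgt Hi.
Qed.

Let k := (d %/ m)%N.
Lemma mk : (m * k)%N = d.
Proof. by rewrite /k mulnC divnK. Qed.

Let php := phi p%:P.

Lemma php0 : php`_0 = 0.
Proof. by rewrite phi0c gammaL_C. Qed.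

Lemma php_neq0 : php != 0.
Proof.
have nzp : p != 0 by rewrite monic_neq0.
have [Hs _] := phiC_poly nzp.
by rewrite -size_poly_gt0 /php Hs size_p.
Qed.

Lemma php_low i : (i < k)%N -> php`_i = 0.
Proof.
have [j [Hj Hlow]] := first_nz php_neq0.
move=> Hik; apply: (Hlow); apply: leq_trans Hik _.
have j_gt0 : (0 < j)%N by case: (posnP j) Hj => [->|//]; rewrite php0 eqxx.
have Hcom : om php phX = om phX php by rewrite /php /phX -!phiM mulrC.
have H1 := oremul_lowc qg0 Hlow (fun i (H : (i < 0)%N) => False_ind _ (notF H)).
have H2 := oremul_lowc qg0 (fun i (H : (i < 0)%N) => False_ind _ (notF H)) Hlow.
have : php`_j * phX`_0 ^+ (q ^ j) = phX`_0 * php`_j ^+ (q ^ 0).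
  by rewrite -H1 -H2 addn0 add0n Hcom.
rewrite phX0 expn0 expr1 mulrC => /(mulIf Hj) Hth.
have := theta_frob irr_p root_p j_gt0 Hth.
by rewrite size_p.
Qed.


Lemma phiR_low n i : (i < n * k)%N -> (phi (alpha *: p ^+ n)%:P)`_i = 0.
Proof.
elim: n i => [|n IH] i Hi; first by rewrite mul0n in Hi.
have -> : (alpha *: p ^+ n.+1)%:P = (alpha *: p ^+ n)%:P * p%:P.
  by rewrite exprSr scalerAl polyCM.
rewrite phiM; apply: (oremul_low qg0 IH php_low).
by rewrite -mulSnr.
Qed.

Let R := phi (alpha *: p ^+ m)%:P.

Lemma R_low i : (i < d)%N -> R`_i = 0.
Proof. by move=> Hi; apply: phiR_low; rewrite mk. Qed.

Lemma R_size_lead : size R = d.*2.+1 /\ lead_coef R = in_alg L alpha * lam d.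
Proof.
have nzp : p != 0 by rewrite monic_neq0.
have nzc : alpha *: p ^+ m != 0 by rewrite scale_poly_eq0 negb_or alpha0 expf_neq0.
have [Hs Hl] := phiC_poly nzc.
have szc : size (alpha *: p ^+ m) = d.+1.
  rewrite size_scale //; have := size_exp p m; rewrite size_p /= mulnC mk.
  have : (0 < size (p ^+ m))%N by rewrite size_poly_gt0 expf_neq0.
  set s := size (p ^+ m); lia.
rewrite /R Hs Hl szc lead_coefZ lead_coef_exp (eqP mon_p) expr1n mulr1.
by split => //; rewrite -muln2; lia.
Qed.

Let phY := phi 'X.
Let E := phi ('X + h%:P).

Lemma E0 : E`_0 != 0.
Proof. by rewrite phi0c gammaLD gammaL_X add0r gammaL_C (nonroot irr_p root_p). Qed.

Lemma relR : om phY E = R.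
Proof.
have : phi xi = 0 by apply: phiI; exists 1; rewrite mulr1.
have -> : xi = 'X * ('X + h%:P) - (alpha *: p ^+ m)%:P by rewrite /xi; ring.
by rewrite phiB phiM => /eqP; rewrite subr_eq0 => /eqP.
Qed.


Lemma phY_form : exists2 b, b != 0 & phY = b *: 'X^d.
Proof.
have [sR lR] := R_size_lead.
have nzY : phY != 0.
  apply/eqP => Y0; move: sR; rewrite -relR Y0 oremul0p size_poly0 //.
have [j [Hj Hlow]] := first_nz nzY.
have Rj : R`_j != 0.
  rewrite -relR -[j]addn0 (oremul_lowc qg0 Hlow (fun i (H : (i < 0)%N) => False_ind _ (notF H))).
  by rewrite mulf_neq0 // expf_neq0 // E0.
have dj : (d <= j)%N by rewrite leqNgt; apply: contra Rj => /R_low ->.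
have low : forall i, (i < d)%N -> phY`_i = 0 by move=> i Hi; apply: Hlow; apply: leq_trans dj.
have sYj : (j < size phY)%N by rewrite ltnNge; apply: contra Hj => /leq_sizeP ->.
have sh : (size (phi h%:P) <= d)%N.
  have [Hs _] := phiC_poly h0; rewrite Hs.
  have := odd_double_half d; rewrite odd_d => Hd.
  move: size_h; rewrite -muln2; set sh := size h; set t := d./2; rewrite -Hd /=; lia.
have HE : E = phY + phi h%:P by rewrite /E phiD.
have sE : size E = size phY by rewrite HE size_addl //; apply: leq_ltn_trans sh _; lia.
have nzE : E != 0 by rewrite -size_poly_gt0 sE size_poly_gt0.
have sY : size phY = d.+1.
  move: sR; rewrite -relR size_oremul // sE.
  move: sYj dj; set sy := size phY; rewrite -muln2; lia.
exists phY`_d.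
  have jd : j = d by move: sYj dj; rewrite sY; lia.
  by rewrite -jd.
apply/polyP => i; rewrite coefZ coefXn.
case: (ltngtP i d) => Hi.
- by rewrite low // mulr0.
- by rewrite mulr0 nth_default // sY.
- by rewrite Hi mulr1.
Qed.


Lemma frob_d (x : L) : x ^+ (q ^ d) = x.
Proof. by rewrite -dimL frob_all. Qed.

Lemma frob2 (x : L) : x ^+ (q ^ 2) = x -> x ^+ q = x.
Proof.
move=> H2.
have Ht : forall t, x ^+ (q ^ (2 * t)) = x.
  elim=> [|t IH]; first by rewrite muln0 expr1.
  by rewrite mulnS expnD exprM H2 IH.
have := Ht (d./2).+1; rewrite mulnS.
have := odd_double_half d; rewrite odd_d => Hd.
rewrite (_ : (2 + 2 * d./2)%N = (d + 1)%N); last by move: Hd; set t := d./2; lia.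
by rewrite expnD exprM frob_d expn1.
Qed.

Lemma main_form : exists2 beta : F, beta != 0 &
  phY = (in_alg L beta) *: 'X^d /\
  (in_alg L beta) ^+ 2 = in_alg L alpha * galNorm 1 {:L} Delta.
Proof.
have [b nzb Hb] := phY_form.
have sY : size phY = d.+1 by rewrite Hb size_scale // size_polyXn.
have lY : lead_coef phY = b by rewrite Hb lead_coefZ lead_coefXn mulr1.
have nzY : phY != 0 by rewrite -size_poly_gt0 sY.
have nzX : phX != 0 by rewrite -size_poly_gt0 size_phX.
have lX : lead_coef phX = Delta by rewrite /lead_coef size_phX.
have Hcom : om phY phX = om phX phY by rewrite /phY /phX -!phiM mulrC.
have T1 := oremul_top qg0 nzY nzX.
have T2 := oremul_top qg0 nzX nzY.
rewrite sY size_phX /= in T1 T2.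
rewrite Hcom addnC T2 lX lY frob_d in T1.
have b2 : b ^+ (q ^ 2) = b by apply: (mulfI Delta_neq0); rewrite T1 mulrC.
have [beta Hbeta] := frob_fixF (frob2 b2).
exists beta.
  by apply: contra nzb; rewrite Hbeta => /eqP ->; rewrite rmorph0.
split; first by rewrite -Hbeta.
have [sR lR] := R_size_lead.
have sh : (size (phi h%:P) < size phY)%N.
  have [Hs _] := phiC_poly h0; rewrite Hs sY.
  have := odd_double_half d; rewrite odd_d => Hd.
  move: size_h; rewrite -muln2; set sh := size h; set t := d./2; rewrite -Hd /=; lia.
have HE : E = phY + phi h%:P by rewrite /E phiD.
have lE : lead_coef E = b by rewrite HE lead_coefDl.
have nzE : E != 0 by rewrite -lead_coef_eq0 lE.
rewrite -Hbeta -(norm_odd dimL odd_d) -/(lam d) -lR -relR lead_oremul // lE lY sY /= frob_d.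
by rewrite expr2.
Qed.


Lemma coefR_d : R`_d = phY`_d * (gammaL theta ('X + h%:P)) ^+ (q ^ d).
Proof.
have [b nzb Hb] := phY_form.
have low : forall i, (i < d)%N -> phY`_i = 0.
  by move=> i Hi; rewrite Hb coefZ coefXn (ltn_eqF Hi) mulr0.
rewrite -relR -[d]addn0 (oremul_lowc qg0 low (fun i (H : (i < 0)%N) => False_ind _ (notF H))).
by rewrite addn0 phi0c.
Qed.

End Main.

Unset Implicit Arguments.

Theorem lemma5 (F : finFieldType) (d m : nat) (p : {poly F}) (alpha : F)
  (h : {poly F}) (L : splittingFieldType F) (theta : L) :
  odd d -> (5 <= d)%N -> (0 < m)%N -> (m %| d)%N ->
  p \is monic -> irreducible_poly p -> size p = (d %/ m).+1 ->
  alpha != 0 ->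
  h != 0 -> (size h <= (d.-1)./2 + 1)%N -> ~~ (p %| h) ->
  nonsingular ('X^2 + h%:P * 'X - (alpha *: p ^+ m)%:P) ->
  \dim {: L} = d ->
  (map_poly (in_alg L) p).[theta] = 0 ->
  let xi := 'X^2 + h%:P * 'X - (alpha *: p ^+ m)%:P in
  (forall phi : {poly {poly F}} -> {poly L}, Dr1 xi theta phi ->
     exists (Delta g : L) (beta : F),
       [/\ Delta != 0, beta != 0,
           phi ('X%:P) = Delta *: 'X^2 + g *: 'X + (gammaL theta ('X%:P))%:P,
           phi 'X = (in_alg L beta) *: 'X^d
         & (in_alg L beta) ^+ 2 = in_alg L alpha * galNorm 1 {: L} Delta])
  /\
  (forall phi1 phi2 : {poly {poly F}} -> {poly L},
     Dr1 xi theta phi1 -> Dr1 xi theta phi2 ->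
     phi1 ('X%:P) = phi2 ('X%:P) -> forall a, phi1 a = phi2 a).
Proof.
move=> odd_d d5 m_gt0 m_d mon_p irr_p size_p alpha0 h0 size_h ph _ dimL root_p xi.
have H := main_form odd_d d5 m_gt0 m_d mon_p irr_p size_p alpha0 h0 size_h ph dimL root_p.
have HR := coefR_d odd_d d5 m_gt0 m_d mon_p irr_p size_p alpha0 h0 size_h ph dimL root_p.
split.
  move=> phi Hphi; have [beta nzb [HY Hn]] := H phi Hphi.
  exists (phi 'X%:P)`_2, (phi 'X%:P)`_1, beta; split => //.
    exact: Delta_neq0 Hphi.
  exact: phX_form Hphi.
move=> phi1 phi2 H1 H2 HX.
have HC : forall c, phi1 c%:P = phi2 c%:P.
  elim/poly_ind => [|c e IH]; first by rewrite (phi0 H1) (phi0 H2).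
  by rewrite (phiC_add H1) (phiC_add H2) IH HX.
have HY : phi1 'X = phi2 'X.
  have [b1 _ [E1 _]] := H phi1 H1; have [b2 _ [E2 _]] := H phi2 H2.
  have C1 := HR phi1 H1; have C2 := HR phi2 H2.
  rewrite HC C2 in C1.
  have nzg : gammaL theta ('X + h%:P) ^+ (#|F| ^ d) != 0.
    by rewrite expf_neq0 // gammaLD gammaL_X add0r gammaL_C (nonroot irr_p root_p).
  have := mulIf nzg C1; rewrite E1 E2 !coefZ coefXn eqxx !mulr1 => ->.
  by [].
elim/poly_ind => [|a c IH]; first by rewrite (phi0 H1) (phi0 H2).
by rewrite (phiD H1) (phiD H2) (phiM H1) (phiM H2) IH HY HC.
Qed.
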